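(* There is an absolute constant $C>0$ such that the following holds. Let $\alpha\ge1$, $\rho\in(0,1]$, and let $A,H,Z$ be as in the model of the context with $|A_{ij}|\le\Gamma$ for all $(i,j)$, the rows $\eta_{i,\cdot}$ of $H$ independent, mean zero with $\|\eta_{i,\cdot}\|_{\psi_\alpha}\le K_\alpha$, and the $\pi_{ij}$ i.i.d. Bernoulli$(\rho)$ independent of $H$. Then $$\mathbb{P}\Big\{\max_{j\in[p]}\|Z_{\cdot,j}-\rho A_{\cdot,j}\|_2^2>9C(K_\alpha+\Gamma)^2N\log^{2/\alpha}(Np)\Big\}\le\frac{2}{N^8p^8}.$$
   Context: For a random variable $X$, $\|X\|_{\psi_\alpha}=\inf\{t>0:\mathbb{E}\exp(|X|^\alpha/t^\alpha)\le2\}$; for a random vector $X$, $\|X\|_{\psi_\alpha}=\sup_{\|v\|_2=1}\|\langle X,v\rangle\|_{\psi_\alpha}$. Model: $A\in\mathbb{R}^{N\times p}$ deterministic, $H$ random with rows $\eta_{i,\cdot}$ and entries $\eta_{ij}$; $Z_{ij}=A_{ij}+\eta_{ij}$ if $\pi_{ij}=1$ and $Z_{ij}=0$ (unobserved entry identified with 0) if $\pi_{ij}=0$. *)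

(* Defs.v *)
From HB Require Import structures.
From mathcomp Require Import all_boot all_order all_algebra.
From mathcomp Require Import all_classical all_reals all_analysis.
Set Implicit Arguments. Unset Strict Implicit. Unset Printing Implicit Defensive.
Import Order.TTheory GRing.Theory Num.Theory.
Local Open Scope classical_set_scope.
Local Open Scope ring_scope.

Section Defs.
Context {d : measure_display} {T : measurableType d} {R : realType}.

Definition sigma_of (K : Type) (X : K -> T -> R) : set (set T) :=
  <<s [set A | exists k B, measurable B /\ A = X k @^-1` B] >>.

Definition mutual_indep (P : probability T R) (I : finType)
    (F : I -> set (set T)) : Prop :=
  forall (J : {set I}) (A : I -> set T),
    (forall i, i \in J -> F i (A i)) ->
    P (\bigcap_(i in [set i | i \in J]) A i) = (\prod_(i in J) P (A i))%E.

Definition psi_norm (P : probability T R) (alpha : R) (X : T -> R) : \bar R :=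
  ereal_inf [set t%:E | t in
    [set t : R | 0 < t /\
      (\int[P]_w (expR ((`|X w| `^ alpha) / (t `^ alpha)))%:E <= 2%:E)%E]].

Definition psi_norm_vec (P : probability T R) (alpha : R) (p : nat)
    (X : 'I_p -> T -> R) : \bar R :=
  ereal_sup [set psi_norm P alpha (fun w => \sum_(j < p) v j * X j w) | v in
    [set v : 'I_p -> R | \sum_(j < p) v j ^+ 2 = 1]].

End Defs.

Definition Zobs {T : Type} {R : realType} (Aij : R) (eta pi : T -> R) (w : T) : R :=
  if pi w == 1 then Aij + eta w else 0.

(* Main.v *)
Require Import Defs.
From HB Require Import structures.
From mathcomp Require Import all_boot all_order all_algebra.
From mathcomp Require Import all_classical all_reals all_analysis.
From mathcomp Require Import measurable_realfun lra ring.
Import Order.TTheory GRing.Theory Num.Theory.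
Local Open Scope classical_set_scope.
Local Open Scope ring_scope.


Section S.
Context {d : measure_display} {T : measurableType d} {R : realType} (P : probability T R).
Lemma markov_psi (X : {RV P >-> R}) (alpha t eps : R) : 0 < alpha -> 0 < t -> 0 < eps ->
  (\int[P]_w (expR ((`|X w| `^ alpha) / (t `^ alpha)))%:E <= 2%:E)%E ->
  (P [set w | (eps <= `|X w|)%R] <= (2 * expR (- (eps `^ alpha / t `^ alpha)))%:E)%E.
Proof.
move=> a0 t0 e0 hI.
pose f (x : R) := expR (x `^ alpha / t `^ alpha).
have := @markov _ _ _ P X f eps e0.
have ta0 : 0 < t `^ alpha by apply: powR_gt0.
have /[swap]/[apply] : measurable_fun [set: R] f.
  apply: measurableT_comp => //.
  apply: measurable_funM => //.
have /[swap]/[apply] : (forall r, 0 <= r -> 0 <= f r) by move=> r _; exact: expR_ge0.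
have /[swap]/[apply] : {in Num.nneg &, {homo f : x y / x <= y}}.
  move=> x y x0 y0 xy; rewrite /f ler_expR ler_pM2r ?invr_gt0//.
  by apply: ge0_ler_powR => //; exact: ltW.
move=> H.
have ES : [set x | (eps%:E <= `|(X x)%:E|)%E] = [set w | eps <= `|X w|].
  by apply/funext => w /=; rewrite /= lee_fin.
rewrite ES in H.
rewrite unlock in H.
have H2 := le_trans H hI.
rewrite expRN mulrC EFinM.
by rewrite lee_pdivlMl ?expR_gt0.
Qed.
Lemma union_bound (I : eqType) (s : seq I) (F : I -> set T) (A : set T) (c : R) :
  (forall i, measurable (F i)) -> measurable A ->
  (forall i, (P (F i) <= c%:E)%E) ->
  A `<=` [set w | exists i, i \in s /\ F i w] ->
  (P A <= ((size s)%:R * c)%:E)%E.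
Proof.
move=> mF; elim: s A => [|a s IH] A mA hc sub.
  have -> : A = set0 by apply/seteqP; split => // w /sub [i []].
  by rewrite measure0 /= mul0r.
have mAD : measurable (A `\` F a) by exact: measurableD.
have h1 : (P A <= P (F a `|` (A `\` F a)))%E.
  apply: le_measure; rewrite ?inE //; first exact: measurableU.
  by move=> w Aw; have [Fw|nFw] := pselect (F a w); [left|right].
apply: (le_trans h1); apply: (le_trans (measureU2 _ _ _)) => //.
have h2 : (P (A `\` F a) <= ((size s)%:R * c)%:E)%E.
  apply: IH => // w [Aw nFw]; have [i [ins Fi]] := sub w Aw.
  move: ins; rewrite inE => /orP[/eqP ei|iin]; first by subst i.
  by exists i.
rewrite /= -natr1 mulrDl mul1r EFinD addrC.
by apply: leeD.
Qed.
Lemma psi_ge0 alpha (X : T -> R) : (0 <= psi_norm P alpha X)%E.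
Proof.
apply: le_ereal_inf_tmp => _ [t [t0 _] <-]; rewrite lee_fin; exact: ltW.
Qed.

Lemma psi_vec_ge (p : nat) alpha (eta : 'I_p -> T -> R) j :
  (psi_norm P alpha (eta j) <= psi_norm_vec P alpha eta)%E.
Proof.
have hf : (fun w => \sum_(k < p) (k == j)%:R * eta k w) = eta j.
  apply/funext => w; rewrite (bigD1 j) //= eqxx mul1r big1 ?addr0 //.
  by move=> k /negbTE ->; rewrite mul0r.
rewrite -[X in (psi_norm P alpha X <= _)%E]hf.
apply: ereal_sup_ubound; exists (fun k => (k == j)%:R) => //.
rewrite /= (bigD1 j) //= eqxx expr1n big1 ?addr0 //.
by move=> k /negbTE ->; rewrite expr0n.
Qed.

Lemma psi_pick (p : nat) alpha (eta : 'I_p -> T -> R) j K c :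
  (psi_norm_vec P alpha eta <= K%:E)%E -> K < c ->
  exists t, [/\ 0 < t, t < c &
    (\int[P]_w (expR ((`|eta j w| `^ alpha) / (t `^ alpha)))%:E <= 2%:E)%E].
Proof.
move=> hK Kc.
have h : (psi_norm P alpha (eta j) < c%:E)%E.
  have h1 := psi_vec_ge _ alpha eta j.
  have h2 : (K%:E < c%:E)%E by rewrite lte_fin.
  exact: (le_lt_trans h1 (le_lt_trans hK h2)).
have [_ [t [t0 hI] <-]] := ereal_inf_lt h.
by rewrite lte_fin => tc; exists t.
Qed.

Lemma psi_K_ge0 (p : nat) alpha (eta : 'I_p -> T -> R) (j : 'I_p) K :
  (psi_norm_vec P alpha eta <= K%:E)%E -> 0 <= K.
Proof.
move=> hK; rewrite -lee_fin; apply: le_trans hK; apply: le_trans (psi_vec_ge _ alpha eta j).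
exact: psi_ge0 alpha (eta j).
Qed.

Lemma meas_ge (f : T -> R) (c : R) : measurable_fun setT f -> measurable [set w | c <= f w].
Proof.
move=> mf; have := mf measurableT _ (measurable_itv `[c, +oo[); rewrite setTI.
suff -> : [set w | c <= f w] = f @^-1` `[c, +oo[%classic by [].
by apply/seteqP; split => w /=; rewrite in_itv /= andbT.
Qed.

Lemma meas_gt (f : T -> R) (c : R) : measurable_fun setT f -> measurable [set w | c < f w].
Proof.
move=> mf; have := mf measurableT _ (measurable_itv `]c, +oo[); rewrite setTI.
suff -> : [set w | c < f w] = f @^-1` `]c, +oo[%classic by [].
by apply/seteqP; split => w /=; rewrite in_itv /= andbT.
Qed.

End S.

Theorem mainTheorem11 (R : realType) :
  exists C : R, 0 < C /\
  forall (d : measure_display) (T : measurableType d) (P : probability T R)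
    (N p : nat) (alpha rho Gamma K : R)
    (A : 'I_N -> 'I_p -> R)
    (eta : 'I_N -> 'I_p -> {RV P >-> R})
    (pi : 'I_N -> 'I_p -> {RV P >-> R}),
    (0 < N)%N -> (0 < p)%N ->
    1 <= alpha -> 0 < rho <= 1 ->
    (forall i j, `|A i j| <= Gamma) ->
    (* rows of H mean zero, independent, with bounded psi_alpha norm *)
    (forall i j, ('E_P[eta i j] = 0)%E) ->
    (forall i, (psi_norm_vec P alpha (fun j => eta i j) <= K%:E)%E) ->
    mutual_indep P (fun i : 'I_N => sigma_of (fun j : 'I_p => eta i j)) ->
    (* pi_ij i.i.d. Bernoulli(rho) *)
    (forall i j w, pi i j w = 0 \/ pi i j w = 1) ->
    (forall i j, P [set w | pi i j w = 1] = rho%:E) ->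
    mutual_indep P (fun ij : 'I_N * 'I_p =>
                      sigma_of (fun _ : unit => pi ij.1 ij.2)) ->
    (* pi independent of H *)
    mutual_indep P (fun b : bool =>
      if b then sigma_of (fun ij : 'I_N * 'I_p => eta ij.1 ij.2)
      else sigma_of (fun ij : 'I_N * 'I_p => pi ij.1 ij.2)) ->
    (P [set w | exists j : 'I_p,
          (\sum_(i < N) (Zobs (A i j) (eta i j) (pi i j) w - rho * A i j) ^+ 2
           > 9 * C * (K + Gamma) ^+ 2 * N%:R * (ln (N%:R * p%:R)) `^ (2 / alpha))%R]
     <= (2 / (N%:R ^+ 8 * p%:R ^+ 8))%R%:E)%E.
Proof.
exists 100; split; first by rewrite ltr0n.
move=> d T P N p alpha rho Gamma K A eta pi hN hp ha hrho hA _ hK _ hpi _ _ _.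
move/andP: hrho => [r0 r1].
have hZ i j w : Zobs (A i j) (eta i j) (pi i j) w = pi i j w * (A i j + eta i j w).
  rewrite /Zobs; case: (hpi i j w) => ->; first by rewrite eq_sym oner_eq0 mul0r.
  by rewrite eqxx mul1r.
set n := N%:R * p%:R.
set thr := (9 * 100 * _ * _ * _).
pose g j w := \sum_(i < N) (pi i j w * (A i j + eta i j w) - rho * A i j) ^+ 2.
have -> : [set w | exists j : 'I_p, (thr < \sum_(i < N) (Zobs (A i j) (eta i j) (pi i j) w - rho * A i j) ^+ 2)%R]
   = \bigcup_(j in [set: 'I_p]) [set w | thr < g j w].
  apply/seteqP; split => w /=.
    by move=> [j hj]; exists j => //; move: hj; rewrite /g; under eq_bigr do rewrite hZ.
  by move=> [j _ hj]; exists j; move: hj; rewrite /g; under eq_bigr do rewrite hZ.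
have mg j : measurable_fun setT (g j).
  apply: measurable_sum => i; apply: measurable_funX; apply: measurable_funB => //.
  apply: measurable_funM => //; apply: measurable_funD => //.
have mE : measurable (\bigcup_(j in [set: 'I_p]) [set w | thr < g j w]).
  apply: fin_bigcup_measurable; first exact: finite_finset.
  by move=> j _; apply: meas_gt.
have i0 : 'I_N := Ordinal hN.
have j0 : 'I_p := Ordinal hp.
have G0 : 0 <= Gamma by apply: le_trans (hA i0 j0).
have n1 : 1 <= n.
  by rewrite /n -natrM ler1n muln_gt0 hN hp.
rewrite -exprMn -/n.
have [n1'|] := ltP 1 n; last first.
  move=> nle; have -> : n = 1 by apply/eqP; rewrite eq_le nle n1.
  rewrite expr1n divr1; apply: le_trans (probability_le1 P mE) _.
  by rewrite lee_fin ler1n.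

have hK0 : 0 <= K := @psi_K_ge0 _ _ _ P _ _ _ j0 _ (hK i0).
have a0 : 0 < alpha by apply: lt_le_trans ha.
have n2 : 2 <= n.
  move: n1'; rewrite /n -natrM ltr1n => h.
  by rewrite ler_nat.
have npos : n \in Num.pos by rewrite posrE; apply: lt_trans n1'.
have [KG|KG] := ltP 0 (K + Gamma); last first.
  have K0 : K = 0 by lra.
  have Gm0 : Gamma = 0 by lra.
  have A0 i j : A i j = 0 by have := hA i j; rewrite Gm0 normr_le0 => /eqP.
  have thr0 : thr = 0 by rewrite /thr K0 Gm0 addr0 expr0n /= mulr0 !mul0r.
  have hzero i j (k : nat) : (P [set w | ((k.+1%:R)^-1 <= `|eta i j w|)%R] <= 0%:E)%E.
    set u : R := (k.+1%:R)^-1.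
    have u0 : 0 < u by rewrite /u invr_gt0 ltr0n.
    apply/lee_addgt0Pr => e e0; rewrite add0e.
    have hc : K < Num.min u (e * u / 2).
      by rewrite K0 lt_min u0 /= divr_gt0 // mulr_gt0.
    have [t [t0 tc hI]] := @psi_pick _ _ _ P _ alpha (fun j => eta i j) j K _ (hK i) hc.
    move: tc; rewrite lt_min => /andP[tu tu2].
    apply: le_trans (@markov_psi _ _ _ P (eta i j) alpha t u a0 t0 u0 hI) _.
    rewrite lee_fin.
    set x := u / t.
    have x1 : 1 <= x by rewrite /x ler_pdivlMr // mul1r ltW.
    have hx : u `^ alpha / t `^ alpha = x `^ alpha.
      have -> : u = t * x by rewrite /x mulrC divfK // gt_eqF.
      rewrite powRM ?(ltW t0) //; last lra.
      by rewrite mulrC mulKf // gt_eqF // powR_gt0.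
    rewrite hx.
    have hxa : x <= x `^ alpha by apply: le1r_powR.
    have hy : x `^ alpha <= expR (x `^ alpha).
      by have := expR_ge1Dx (x `^ alpha); lra.
    have h1 : expR (- x `^ alpha) <= x^-1.
      rewrite expRN lef_pV2 ?posrE ?expR_gt0 //; last lra.
      exact: le_trans hxa hy.
    apply: le_trans (_ : 2 * x^-1 <= e); first by rewrite ler_pM2l.
    rewrite /x invf_div.
    have : 2 * t < e * u by move: tu2; rewrite ltr_pdivlMr //; lra.
    move=> h; rewrite mulrA ler_pdivrMr //; lra.
  have hnull i j : (P [set w | (0 < `|eta i j w|)%R] <= 0%:E)%E.
    have -> : [set w | (0 < `|eta i j w|)%R] =
              \bigcup_k [set w | ((k.+1%:R)^-1 <= `|eta i j w|)%R].
      apply/seteqP; split => w /=.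
        move=> /ltr_add_invr [m]; rewrite add0r => hk.
        by exists m => //=; apply: ltW.
      move=> [m _ /= hk]; apply: lt_le_trans hk; by rewrite invr_gt0 ltr0n.
    have mFk k : measurable [set w | ((k.+1%:R)^-1 <= `|eta i j w|)%R].
      apply: meas_ge; apply: measurableT_comp => //; exact: measurable_funP.
    have hs := measure_sigma_subadditive P mFk (bigcupT_measurable _ mFk) (@subset_refl _ _).
    apply: le_trans hs _.
    rewrite eseries0 // => k _ _; apply/eqP; rewrite eq_le measure_ge0 andbT.
    exact: hzero.
  have mG ij : measurable [set w | (0 < `|eta ij.1 ij.2 w|)%R].
    apply: meas_gt; apply: measurableT_comp => //; exact: measurable_funP.
  have := @union_bound _ _ _ P _ (enum {: 'I_N * 'I_p})
    (fun ij => [set w | (0 < `|eta ij.1 ij.2 w|)%R]) _ 0 mG mE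
    (fun ij => hnull ij.1 ij.2).
  have sub : \bigcup_(j in [set: 'I_p]) [set w | thr < g j w] `<=`
      [set w | exists ij, ij \in enum {: 'I_N * 'I_p} /\ (0 < `|eta ij.1 ij.2 w|)%R].
    move=> w [j _ /= hj].
    have [[i hi]|nex] := pselect (exists i, (0 < `|eta i j w|)%R).
      by exists (i, j); split => //; rewrite mem_enum.
    exfalso; move: hj; apply/negP; rewrite -leNgt thr0.
    rewrite /g big1 // => i _.
    have : `|eta i j w| <= 0 by rewrite leNgt; apply/negP => h; apply: nex; exists i.
    rewrite normr_le0 => /eqP ->; rewrite A0 !mulr0 subr0 addr0.
    by rewrite mulr0 expr0n.
  move=> /(_ sub) ub; apply: le_trans ub _.
  rewrite mulr0 lee_fin divr_ge0 // exprn_ge0 //; lra.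
set L := ln n.
have L0 : 0 < L by rewrite ln_gt0.
have L2 : 2^-1 <= L.
  have h := @le_ln1Dx R (- 2^-1) ltac:(lra).
  have e : 1 + - 2^-1 = (2 : R)^-1 by lra.
  rewrite e lnV ?posrE // lerN2 in h.
  apply: le_trans h _; rewrite /L ler_ln ?posrE //.
have ai1 : alpha^-1 <= 1 by rewrite invf_le1.
have ai0 : 0 <= alpha^-1 by rewrite invr_ge0 ltW.
set Lq := L `^ alpha^-1.
have Lq2 : 2^-1 <= Lq.
  have [L1|L1] := leP 1 L.
    apply: le_trans (_ : 1 <= Lq); first lra.
    by rewrite /Lq -{1}(powRr0 L); apply: ler_powR.
  apply: le_trans L2 _; apply: ger1_powR => //; rewrite L0 ltW //.
have thrE : thr = 900 * (K + Gamma) ^+ 2 * N%:R * Lq ^+ 2.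
  rewrite /thr -/L; congr (_ * _); last first.
    by rewrite /Lq -powR_mulrn ?powR_ge0 // -powRrM mulrC.
  by congr (_ * _ * _); rewrite -natrM.
set kap := 2 * (K + Gamma).
have kap0 : 0 < kap by rewrite /kap; lra.
set M := kap * (10 * L) `^ alpha^-1.
have M0 : 0 < M by rewrite /M mulr_gt0 // powR_gt0 //; lra.
have Mle : M <= 20 * (K + Gamma) * Lq.
  rewrite /M powRM; [|lra|lra].
  have h10 : (10 : R) `^ alpha^-1 <= 10 by apply: ler1_powR => //; rewrite ler1n.
  have hq : 0 <= Lq by apply: powR_ge0.
  rewrite -/Lq.
  have -> : kap * ((10 : R) `^ alpha^-1 * Lq) = (2 * ((K + Gamma) * Lq)) * (10 : R) `^ alpha^-1 by rewrite /kap; ring.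
  have -> : 20 * (K + Gamma) * Lq = (2 * ((K + Gamma) * Lq)) * 10 by ring.
  apply: ler_wpM2l => //; apply: mulr_ge0 => //; apply: mulr_ge0 => //; lra.
have Mpow : M `^ alpha = kap `^ alpha * (10 * L).
  rewrite /M powRM; [|lra|by apply: powR_ge0].
  by rewrite -powRrM mulVf ?gt_eqF // powRr1 //; lra.
have hbad i j : (P [set w | (M <= `|eta i j w|)%R] <= (2 / n ^+ 10)%:E)%E.
  have [t [t0 tc hI]] := @psi_pick _ _ _ P _ alpha (fun j => eta i j) j K (2 * K + Gamma) (hK i) ltac:(lra).
  apply: le_trans (@markov_psi _ _ _ P (eta i j) alpha t M a0 t0 M0 hI) _.
  rewrite lee_fin ler_pM2l //.
  have e : expR (- (10 * L)) = (n ^+ 10)^-1.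
    by rewrite expRN -[10]/(10%:R) expRM_natl /L lnK.
  rewrite -e ler_expR lerN2 Mpow ler_pdivlMr ?powR_gt0 //.
  rewrite mulrC ler_pM2r; last lra.
  apply: ge0_ler_powR; rewrite ?nnegrE; try lra.
  rewrite /kap; lra.
have mF ij : measurable [set w | (M <= `|eta ij.1 ij.2 w|)%R].
  apply: meas_ge; apply: measurableT_comp => //; exact: measurable_funP.
have := @union_bound _ _ _ P _ (enum {: 'I_N * 'I_p})
  (fun ij => [set w | (M <= `|eta ij.1 ij.2 w|)%R]) _ (2 / n ^+ 10) mF mE
  (fun ij => hbad ij.1 ij.2).
have sub : \bigcup_(j in [set: 'I_p]) [set w | thr < g j w] `<=`
    [set w | exists ij, ij \in enum {: 'I_N * 'I_p} /\ (M <= `|eta ij.1 ij.2 w|)%R].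
  move=> w [j _ /= hj].
  have [[i hi]|nex] := pselect (exists i, (M <= `|eta i j w|)%R).
    by exists (i, j); split => //; rewrite mem_enum.
  exfalso; move: hj; apply/negP; rewrite -leNgt.
  have hb i : (pi i j w * (A i j + eta i j w) - rho * A i j) ^+ 2 <= (Gamma + M) ^+ 2.
    have e : `|eta i j w| < M by rewrite ltNge; apply/negP => h; apply: nex; exists i.
    have a := hA i j.
    move: e a; rewrite ltr_norml ler_norml => /andP[e1 e2] /andP[a1 a2].
    have [hx1 hx2] : pi i j w * (A i j + eta i j w) - rho * A i j <= Gamma + M /\
                   - (Gamma + M) <= pi i j w * (A i j + eta i j w) - rho * A i j.
      by case: (hpi i j w) => ->; split; nra.
    nra.
  rewrite /g; apply: le_trans (ler_sum _ (fun i _ => hb i)) _.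
  rewrite sumr_const card_ord -mulr_natl thrE.
  have hq : 0 <= Lq by apply: powR_ge0.
  have h2 : Gamma + M <= 22 * ((K + Gamma) * Lq) by nra.
  have h3 : (Gamma + M) ^+ 2 <= (22 * ((K + Gamma) * Lq)) ^+ 2 by nra.
  have hN0 : 0 <= N%:R :> R by [].
  apply: le_trans (ler_wpM2l hN0 h3) _.
  have -> : N%:R * (22 * ((K + Gamma) * Lq)) ^+ 2 = 484 * ((K + Gamma) ^+ 2 * N%:R * Lq ^+ 2) by ring.
  have -> : 900 * (K + Gamma) ^+ 2 * N%:R * Lq ^+ 2 = 900 * ((K + Gamma) ^+ 2 * N%:R * Lq ^+ 2) by ring.
  apply: ler_wpM2r; last by lra.
  by rewrite !mulr_ge0 // ?exprn_ge0 //; lra.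
move=> /(_ sub) ub; apply: le_trans ub _.
rewrite lee_fin -cardE card_prod !card_ord natrM -/n.
have nz : n != 0 by rewrite gt_eqF // (lt_trans _ n1').
have -> : n * (2 / n ^+ 10) = (2 / n ^+ 8) * n^-1 by field.
apply: ler_piMr; first by rewrite divr_ge0 // exprn_ge0 // ltW // (lt_trans _ n1').
by rewrite invf_le1 // (lt_trans _ n1').
Qed.
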